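(* Let $\alpha\in\mathbb C$ and $n\ge 1$ be an integer. The matrix $K_n:=A_\alpha^n-T\big((z+z^{-1})^n\big)$ is a (semi-infinite) Hankel matrix, i.e. its $(i,j)$ entry depends only on $i+j$. Moreover, its first column $k_n:=K_ne_1$ satisfies $$k_{n+1}=A_\alpha k_n+\sigma_n e_1,\qquad n\ge 1,$$ where $\sigma_n=\alpha\binom{n}{n/2}$ if $n$ is even and $\sigma_n=-\binom{n}{\lfloor n/2\rfloor}$ if $n$ is odd.
   Context: All matrices are semi-infinite, with rows and columns indexed by the positive integers, and $e_1$ denotes the first column of the semi-infinite identity matrix $I$. For a Laurent polynomial (or Laurent series with absolutely summable coefficients) $a(z)=\sum_{i\in\mathbb Z}a_iz^i$, $T(a)$ denotes the semi-infinite Toeplitz matrix with $(i,j)$ entry $a_{j-i}$. For $\alpha\in\mathbb C$, $A_\alpha:=T(z+z^{-1})+\alpha e_1e_1^T$, i.e. the semi-infinite tridiagonal matrix with ones on the sub- and superdiagonal, $(1,1)$ entry equal to $\alpha$, and zeros elsewhere. *)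

(* Defs.v *)
From HB Require Import structures.
From mathcomp Require Import all_boot all_order all_algebra.
From mathcomp Require Import complex.
From mathcomp Require Import reals.
Set Implicit Arguments. Unset Strict Implicit. Unset Printing Implicit Defensive.
Import Order.TTheory GRing.Theory Num.Theory.
Local Open Scope ring_scope.

(* Semi-infinite matrices and vectors.  Indexing is 0-based: the paper's
   row/column index p >= 1 corresponds to index p-1 here. *)
Definition smat (C : Type) := nat -> nat -> C.
Definition svec (C : Type) := nat -> C.

Section Defs.
Variable C : comRingType.

Definition e1 : svec C := fun i => (i == 0)%N%:R.

Definition sid : smat C := fun i j => (i == j)%:R.

(* A_alpha = T(z + z^{-1}) + alpha e1 e1^T *)
Definition Aalpha (alpha : C) : smat C := fun i j =>
  (if (i == 0) && (j == 0) then alpha else 0) +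
  ((j == i.+1) || (i == j.+1))%:R.

(* Product A_alpha * M.  Row i of A_alpha is supported on columns k < i+2,
   so the (a priori infinite) sum over k reduces to this finite sum. *)
Definition Amul (alpha : C) (M : smat C) : smat C := fun i j =>
  \sum_(k < i.+2) Aalpha alpha i k * M k j.

(* A_alpha applied to a vector, same remark *)
Definition Amulv (alpha : C) (v : svec C) : svec C := fun i =>
  \sum_(k < i.+2) Aalpha alpha i k * v k.

Fixpoint Apow (alpha : C) (n : nat) : smat C :=
  match n with
  | 0 => sid
  | n'.+1 => Amul alpha (Apow alpha n')
  end.

(* A Laurent polynomial z^{-s} p(z), with p a polynomial, represented by its
   coefficient function m |-> coefficient of z^m. *)
Definition laurent_coef (p : {poly C}) (s : nat) (m : int) : C :=
  match (m + s%:Z)%R with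
  | Posz k => p`_k
  | Negz _ => 0
  end.

(* (z + z^{-1})^n = z^{-n} (z^2 + 1)^n *)
Definition zpzinv_pow (n : nat) : int -> C :=
  laurent_coef (('X ^+ 2 + 1) ^+ n) n.

Definition toeplitz (a : int -> C) : smat C := fun i j => a (j%:Z - i%:Z).

Definition hankel (M : smat C) : Prop :=
  forall i j i' j', (i + j = i' + j')%N -> M i j = M i' j'.

Definition Kmat (alpha : C) (n : nat) : smat C := fun i j =>
  Apow alpha n i j - toeplitz (zpzinv_pow n) i j.

Definition kvec (alpha : C) (n : nat) : svec C := fun i => Kmat alpha n i 0.

Definition sigma (alpha : C) (n : nat) : C :=
  if odd n then - ('C(n, n./2))%:R else alpha * ('C(n, n./2))%:R.

End Defs.

(* Main.v *)
Require Import Defs.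
From HB Require Import structures.
From mathcomp Require Import all_boot all_order all_algebra.
From mathcomp Require Import complex.
From mathcomp Require Import reals.
From mathcomp Require Import zify ring.
Set Implicit Arguments. Unset Strict Implicit. Unset Printing Implicit Defensive.
Import Order.TTheory GRing.Theory Num.Theory.
Local Open Scope ring_scope.

Section S.
Variable C : comNzRingType.

Definition lc (p : {poly C}) (x : int) : C :=
  match x with Posz k => p`_k | Negz _ => 0 end.

Lemma lc_neg p (x : int) : x < 0 -> lc p x = 0.
Proof. by case: x. Qed.

Lemma lc_pos p (k : nat) : lc p k = p`_k.
Proof. by []. Qed.

Lemma lcM p (y : int) : lc (p * ('X^2 + 1)) y = lc p (y - 2) + lc p y.
Proof.
case: y => [k|k]; last first.
  by rewrite !lc_neg ?addr0 //; lia.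
rewrite lc_pos mulrDr mulr1 coefD coefMXn lc_pos.
case: ltnP => hk.
  by rewrite lc_neg //; lia.
have -> : (k%:Z - 2) = (k - 2)%N%:Z by lia.
by rewrite lc_pos.
Qed.

Definition t (n : nat) : int -> C := zpzinv_pow C n.

Lemma tE n m : t n m = lc (('X ^+ 2 + 1) ^+ n) (m + n%:Z).
Proof. by []. Qed.

Lemma T1 n m : t n.+1 m = t n (m - 1) + t n (m + 1).
Proof.
rewrite !tE exprSr lcM.
have -> : m + n.+1%:Z - 2 = m - 1 + n by lia.
have -> : m + n.+1%:Z = m + 1 + n by lia.
by [].
Qed.

Lemma coefP n k : ((('X ^+ 2 + 1) ^+ n : {poly C})`_k) = if odd k then 0 else ('C(n, k./2))%:R.
Proof.
elim: n k => [|n IH] k.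
  rewrite expr0 coef1; case: k => [|[|k]] //=.
  by rewrite negbK; case: ifP.
rewrite exprSr mulrDr mulr1 coefD coefMXn.
case: k => [|[|k]] /=.
- by rewrite IH /= !bin0 add0r.
- by rewrite IH add0r.
- rewrite subn2 /= !IH /=; case: ifP => _; first by rewrite addr0.
  by rewrite binS natrD addrC.
Qed.


Lemma AmulE (alpha : C) (M : smat C) i j :
  Amul alpha M i j = (if i is i'.+1 then M i' j else alpha * M 0%N j) + M i.+1 j.
Proof.
rewrite /Amul; case: i => [|i].
  rewrite !big_ord_recr big_ord0 /= /Aalpha /=.
  by rewrite !(add0r, addr0, mul1r).
rewrite !big_ord_recr /= big1; last first.
  move=> k _; rewrite /Aalpha /=.
  have h := ltn_ord k.
  have -> : (k == i.+2 :> nat) = false by apply/negbTE; lia.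
  have -> : (i.+1 == (k : nat).+1) = false by apply/negbTE; lia.
  by rewrite /= add0r mul0r.
rewrite /Aalpha /= !eqxx ?orbT.
have -> : (i.+1 == i.+2) = false by apply/negbTE; lia.
by rewrite /= !add0r mul0r addr0 !mul1r.
Qed.

Definition rr (alpha : C) n (x : int) : C := alpha * t n x - t n (x + 1).

Lemma step alpha n i j :
  Kmat alpha n.+1 i j = Amul alpha (Kmat alpha n) i j + (if i == 0%N then rr alpha n j else 0).
Proof.
rewrite /Kmat /= !AmulE /toeplitz /rr -/(t n) -/(t n.+1).
case: i => [|i] /=.
  rewrite subr0 T1.
  have -> : (j%:Z - 1) = j%:Z - 1%N%:Z by [].
  ring.
rewrite T1.
have -> : j%:Z - i.+1%:Z - 1 = j%:Z - i.+2%:Z by lia.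
have -> : j%:Z - i.+1%:Z + 1 = j%:Z - i%:Z by lia.
ring.
Qed.



Lemma rr_rec alpha n x : rr alpha n.+1 x = rr alpha n (x - 1) + rr alpha n (x + 1).
Proof.
rewrite /rr !T1.
have -> : x - 1 + 1 = x by ring.
have -> : x + 1 - 1 = x by ring.
ring.
Qed.

Lemma t0pos (k : nat) : t 0 k%:Z = (k == 0%N)%:R.
Proof. by rewrite tE expr0 addr0 lc_pos coef1. Qed.

Lemma t0 (i j : nat) : t 0 (j%:Z - i%:Z) = (i == j)%:R.
Proof.
case: (leqP i j) => h.
  have -> : j%:Z - i%:Z = (j-i)%N%:Z by lia.
  by rewrite t0pos subn_eq0 eqn_leq h.
rewrite tE lc_neg; last by lia.
have -> : (i == j) = false by apply/negbTE; lia.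
by [].
Qed.

Lemma hank alpha n : exists h : nat -> C,
  (forall i j, Kmat alpha n i j = h (i + j)%N) /\
  (forall j, h j = alpha * h j.+1 + rr alpha n (j.+1)%:Z).
Proof.
elim: n => [|n [h [hK hr]]].
  exists (fun _ => 0); split.
    by move=> i j; rewrite /Kmat /= /sid /toeplitz -/(t 0) t0 subrr.
  move=> j; rewrite /rr.
  have -> : j.+1%:Z + 1 = j.+2%:Z by lia.
  by rewrite !t0pos /= mulr0 subrr addr0.
exists (fun m => if m is m'.+1 then h m' + h m'.+2 else alpha * h 0%N + h 1%N + rr alpha n 0); split.
  move=> i j; rewrite step AmulE !hK.
  case: i => [|i] /=.
    case: j => [|j] //=.
    rewrite !add0n add1n (hr j); ring.
  by rewrite addr0 hK !addSn.
case => [|j].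
  rewrite rr_rec (hr 1%N) /=.
  have -> : (1%:Z - 1) = 0 by [].
  have -> : (1%:Z + 1) = 2%N%:Z by [].
  ring.
rewrite rr_rec (hr j) (hr j.+2).
have -> : (j.+2%:Z - 1) = j.+1%:Z by lia.
have -> : (j.+2%:Z + 1) = j.+3%:Z by lia.
ring.
Qed.

Lemma rr0 alpha n : rr alpha n 0 = sigma alpha n.
Proof.
rewrite /rr /sigma add0r !tE add0r.
have -> : 1 + n%:Z = n.+1%N%:Z by lia.
rewrite !lc_pos !coefP /=.
case: ifP => hn; last by rewrite subr0.
rewrite mulr0 sub0r /=.
have HH := odd_double_half n; rewrite hn in HH.
rewrite -bin_sub; last by rewrite uphalf_half hn; lia.
congr (- ('C(_, _))%:R).
rewrite uphalf_half hn; lia.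
Qed.

End S.

Theorem lemma1 (R : realType) (alpha : R[i]) (n : nat) (hn : (1 <= n)%N) :
  hankel (Kmat alpha n) /\
  (forall i : nat,
     kvec alpha n.+1 i = Amulv alpha (kvec alpha n) i + sigma alpha n * e1 R[i] i).
Proof.
split.
  have [h [hK _]] := hank alpha n.
  by move=> i j i' j' E; rewrite !hK E.
move=> i; rewrite /kvec step -rr0 /e1.
case: i => [|i] /=; first by rewrite mulr1.
by rewrite mulr0.
Qed.
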